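(* Let $p$ be a prime and $n$ a positive integer. Let $m\ge1$, let $k_1,\ldots,k_m$ be positive integers with $k_i\le n$, and let $r_1<r_2<\cdots<r_m$ be positive integers such that $$\lfloor n/p^{r_i}\rfloor-\lfloor k_i/p^{r_i}\rfloor-\lfloor (n-k_i)/p^{r_i}\rfloor=1\quad\text{for } i=1,\ldots,m.$$ Then there exists a single positive integer $k\le n$ such that $$\lfloor n/p^{r_i}\rfloor-\lfloor k/p^{r_i}\rfloor-\lfloor (n-k)/p^{r_i}\rfloor=1\quad\text{for all } i=1,\ldots,m.$$ *)

(* Defs.v *)
From mathcomp Require Import all_boot.
Set Implicit Arguments. Unset Strict Implicit. Unset Printing Implicit Defensive.

(* carry_term p n k r := floor(n/p^r) - floor(k/p^r) - floor((n-k)/p^r),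
   computed in int to avoid truncated subtraction issues (k <= n in uses). *)
From mathcomp Require Import all_algebra.
Definition carry_term (p n k r : nat) : int :=
  ((n %/ p ^ r)%:Z - (k %/ p ^ r)%:Z - ((n - k) %/ p ^ r)%:Z)%R.

(* Main.v *)
From mathcomp Require Import all_boot all_algebra.
From Stdlib Require Import Lia.
Import GRing.Theory.
Lemma aux (a b c : int) : (a + b + c - a - b = c)%R.
Proof. by rewrite -addrA -opprD [(a + b + c)%R]addrC addrK. Qed.
Lemma key q n k : 0 < q -> k <= n ->
  (((n %/ q)%:Z - (k %/ q)%:Z - ((n - k) %/ q)%:Z)%R = 1%R) <-> n %% q < k %% q.
Proof.
move=> q0 kn; rewrite -{1}(subnKC kn) divnD // !PoszD aux.
have := modnD k (n-k) q0; rewrite subnKC //.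
have := ltn_pmod k q0; have := ltn_pmod (n-k) q0.
move: (k %% q) ((n - k) %% q) => a b.
case: (leqP q (a + b)) => h /= A B E; split => //= H.
- move: h A B; rewrite E mul1n => /leP h /ltP A /ltP B; apply/ltP; rewrite -?minusE -?plusE in h A B H *. clear E. lia.
- move: h A B H; rewrite E mul0n subn0 => /ltP h /ltP A /ltP B /ltP H. exfalso. rewrite -?plusE in h A B H *. clear E. lia.
Qed.
Require Import Defs.

Theorem mainTheorem7 (p n m : nat) (k r : 'I_m -> nat) :
  prime p -> 0 < n -> 1 <= m ->
  (forall i, 0 < k i /\ k i <= n) ->
  (forall i j : 'I_m, (i < j)%N -> (r i < r j)%N) ->
  (forall i, 0 < r i) ->
  (forall i, carry_term p n (k i) (r i) = 1%R) ->
  exists kk : nat, 0 < kk /\ kk <= n /\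
    (forall i, carry_term p n kk (r i) = 1%R).
Proof.
move=> pp n0 m1 hk hr hr0 hc.
have p0 : 0 < p by apply: prime_gt0.
have p1 : 1 < p by apply: prime_gt1.
have hm : m.-1 < m by rewrite prednK.
set I0 := Ordinal hm.
set R := r I0.
have rle : forall i, r i <= R.
  move=> i; have : i <= I0 by rewrite /= -ltnS prednK.
  rewrite leq_eqVlt => /orP [/eqP E|lt]; last by apply/ltnW/hr.
  by have -> : i = I0 by apply/val_inj.
have hq : forall i, 0 < p ^ r i by move=> i; rewrite expn_gt0 p0.
have hc' : forall i, n %% p ^ r i < k i %% p ^ r i.
  by move=> i; move: (hc i); rewrite /carry_term => /(@key _ _ _ (hq i) (proj2 (hk i))).
have QR : p ^ R <= n.
  rewrite leqNgt; apply/negP => lt.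
  move: (hc' I0); rewrite -/R !modn_small //; last by apply: leq_ltn_trans lt; case: (hk I0).
  by rewrite ltnNge; case: (hk I0) => _ ->.
have Q1 : 1 < p ^ R.
  by apply: leq_trans (p1) _; rewrite -{1}(expn1 p) leq_pexp2l //; apply: hr0.
exists (p ^ R).-1; split; first by rewrite -ltnS prednK // ltnW.
split; first by apply: leq_trans QR; apply: leq_pred.
move=> i; rewrite /carry_term; apply/(@key _ _ _ (hq i)).
  by apply: leq_trans QR; apply: leq_pred.
have : p ^ r i %| p ^ R by apply: dvdn_exp2l.
case/dvdnP => c Ec.
have c0 : 0 < c by move: Q1; rewrite Ec; case: (c).
have -> : (p ^ R).-1 = c.-1 * p ^ r i + (p ^ r i).-1.
  rewrite Ec; move: c0 (hq i); case: (c) => // c1 _; case: (p ^ r i) => // q _.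
  by rewrite mulSn /= addnC.
rewrite (@modnMDl (c.-1) ((p ^ r i).-1) (p ^ r i)) [X in _ < X]modn_small; last by rewrite ltn_predL.
apply: leq_trans (hc' i) _; rewrite -ltnS prednK //; exact: ltn_pmod.
Qed.
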